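(* Let $k$ be a field of characteristic $\neq2$, $f\in k[X]$ separable of degree $6$ with roots $\Omega\subset\bar k$, $\bar A=\bar k[X]/(f)$, and $\delta\in\bar A^*$. Let $\Lambda$ be the set of the $32$ lines $L_\varepsilon$, for $\varepsilon\in\bar A$ with $\varepsilon^2=\delta$, where $L_\varepsilon$ corresponds to the subspace $\{\varepsilon^{-1}(sX+t):s,t\in\bar k\}$ of $\bar A$; note $L_\varepsilon=L_{-\varepsilon}$. Let $L,L'\in\Lambda$ be different lines of the same parity. Then $L$ and $L'$ do not intersect, and there are exactly two lines $M,M'\in\Lambda$ of the opposite parity that intersect both $L$ and $L'$. Moreover there are $\omega,\psi\in\Omega$ such that $\{L,L',M,M'\}$ is an orbit of $\Lambda$ under the group $\Phi_{\omega\psi}$.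
   Context: For $I\subseteq\Omega$ let $\mu_I\in\bar A$ be the element with $\varphi_\theta(\mu_I)=-1$ for $\theta\in I$ and $=1$ otherwise, where $\varphi_\theta$ is evaluation at $X=\theta$. Write $\mu_\omega=\mu_{\{\omega\}}$. Multiplication by $\mu_I$ maps $L_\varepsilon$ to $L_{\varepsilon\mu_I^{-1}}$. Since $\mu_{\Omega\setminus I}=-\mu_I$, it acts on $\Lambda$ simply transitively modulo $\pm1$. Two lines $L,L'\in\Lambda$ have the same parity if for the subset $I$ with $\mu_IL=L'$ the cardinality $\#I$ is even; this is independent of replacing $I$ by $\Omega\setminus I$. Otherwise they have opposite parity. $\Phi_{\omega\psi}$ is the group of automorphisms generated by multiplication by $\mu_\omega$ and $\mu_\psi$. *)

(* Defs.v *)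
From HB Require Import structures.
From mathcomp Require Import all_boot all_order all_algebra all_field.
Set Implicit Arguments. Unset Strict Implicit. Unset Printing Implicit Defensive.
Import GRing.Theory.
Local Open Scope ring_scope.

(* Abar = K[X]/(F) is represented by polynomials in {poly K}, two of them
   denoting the same element of Abar iff F divides their difference.
   A subset of Abar is a predicate on {poly K} (compatible with ~ mod F). *)
Section Defs.
Variables (K : fieldType) (F : {poly K}).

(* the 2-dim subspace eps^{-1}{sX+t} of Abar: v such that eps*v = sX+t in Abar *)
Definition line_of (eps : {poly K}) : {poly K} -> Prop :=
  fun v => exists s t : K, F %| eps * v - (s *: 'X + t%:P).

Definition inLambda (delta : {poly K}) (L : {poly K} -> Prop) : Prop :=
  exists eps, F %| eps ^+ 2 - delta /\ forall v, L v <-> line_of eps v.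

Definition same_line (L L' : {poly K} -> Prop) : Prop := forall v, L v <-> L' v.

(* the projective lines meet: the subspaces share a nonzero element of Abar *)
Definition intersect (L L' : {poly K} -> Prop) : Prop :=
  exists v, ~~ (F %| v) /\ L v /\ L' v.

Definition mul_line (m : {poly K}) (L : {poly K} -> Prop) : {poly K} -> Prop :=
  fun w => exists v, L v /\ F %| w - m * v.

Definition is_mu (I : seq K) (m : {poly K}) : Prop :=
  forall theta, root F theta -> m.[theta] = if theta \in I then -1 else 1.

Definition same_parity (L L' : {poly K} -> Prop) : Prop :=
  exists (I : seq K) (m : {poly K}),
    [/\ uniq I, all (root F) I, ~~ odd (size I), is_mu I m &
        same_line (mul_line m L) L'].

Definition opp_parity (L L' : {poly K} -> Prop) : Prop := ~ same_parity L L'.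

(* N lies in the orbit of L under Phi_{omega psi}, the group generated by
   multiplication by mu_omega and mu_psi *)
Definition in_orbit_Phi (omega psi : K) (L N : {poly K} -> Prop) : Prop :=
  exists (a b : nat) (mo mp : {poly K}),
    [/\ is_mu [:: omega] mo, is_mu [:: psi] mp &
        same_line (mul_line (mo ^+ a * mp ^+ b) L) N].
End Defs.

(* Main.v *)
From Pilot Require Import Defs.
From HB Require Import structures.
From mathcomp Require Import all_boot all_order all_algebra all_field.
From mathcomp Require Import ring.
Import GRing.Theory.
Local Open Scope ring_scope.

Module PilotAux.
Set Implicit Arguments. Unset Strict Implicit. Unset Printing Implicit Defensive.
Local Open Scope nat_scope.
Fixpoint pats n : seq (seq bool) :=
  if n is n'.+1 then [seq b :: l | b <- [:: true; false], l <- pats n'] else [:: [::]].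
Lemma mem_pats n l : size l = n -> l \in pats n.
Proof.
elim: l n => [|b l IH] [|n] //= [/IH H].
by case: b; rewrite !mem_cat (map_f _ H) ?orbT.
Qed.
Lemma bf (Q : pred (seq bool)) : all Q (pats 6) -> forall l, size l = 6 -> Q l.
Proof. by move=> /allP H l /mem_pats /H. Qed.
Definition ix := iota 0 6.
Definition bt (g : seq bool) i := nth false g i.
Definition cst (g : seq bool) := all (fun i => bt g i == bt g 0) ix.
Definition bad (g : seq bool) :=
  has (fun i => has (fun j => (i != j) && ~~ bt g i && ~~ bt g j) ix) ix &&
  has (fun i => has (fun j => (i != j) && bt g i && bt g j) ix) ix.
Definition xr (g h : seq bool) := mkseq (fun i => bt g i (+) bt h i) 6.
Definition zz := mkseq (fun i : nat => false) 6.
Definition sing (a : nat) := mkseq (fun i => i == a) 6.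
Definition pr (a b : nat) := mkseq (fun i => (i == a) || (i == b)) 6.
Definition npr (a b : nat) := mkseq (fun i => ~~ ((i == a) || (i == b))) 6.
Definition gam (x y : bool) (a b : nat) := mkseq (fun i => (x && (i == a)) (+) (y && (i == b))) 6.
Definition ispr (t : seq bool) a b := (t == pr a b) || (t == npr a b).

Lemma K_pig : all (fun x => has (fun i => has (fun j => (i != j) && (bt x i == bt x j)) ix) ix) (pats 6).
Proof. by vm_compute. Qed.
Lemma K_nint : all (fun x => ~~ bad x ==> has (fun c => has (fun d => has (fun b0 =>
   (d != c) && all (fun i => (i != c) ==> (bt x i == b0)) ix) [:: true; false]) ix) ix) (pats 6).
Proof. by vm_compute. Qed.
Lemma K_cstz : all (fun t => cst t ==> cst (xr zz t)) (pats 6).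
Proof. by vm_compute. Qed.
Lemma K1 : all (fun t => ~~ odd (count id t) ==> ~~ cst t ==> bad (xr zz t) &&
   has (fun a => has (fun b => (a != b) && ispr t a b) ix) ix) (pats 6).
Proof. by vm_compute. Qed.
Lemma K_MM : all (fun a => all (fun b => (a != b) ==> ~~ cst (xr (sing a) (sing b))) ix) ix.
Proof. by vm_compute. Qed.
Lemma K_opp : all (fun r => all (fun a => ~~ odd (count id r) ==> ~~ cst (xr (xr zz r) (sing a))) ix) (pats 6).
Proof. by vm_compute. Qed.
Lemma K_int : all (fun t => all (fun a => all (fun b => (a != b) ==> ispr t a b ==>
   [&& ~~ bad (xr zz (sing a)), ~~ bad (xr zz (sing b)), ~~ bad (xr t (sing a)) & ~~ bad (xr t (sing b))]) ix) ix) (pats 6).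
Proof. by vm_compute. Qed.
Lemma K_uniq : all (fun a => all (fun b => (a != b) ==> all (fun t => all (fun s =>
   ~~ cst s ==> ~~ bad (xr zz s) ==> ~~ bad (xr t s) ==> cst (xr s (sing a)) || cst (xr s (sing b))) (pats 6)) [:: pr a b; npr a b]) ix) ix.
Proof. by vm_compute. Qed.
Lemma K_orb : all (fun t => all (fun a => all (fun b => (a != b) ==> ispr t a b ==> all (fun x => all (fun y =>
   [|| cst (xr (xr zz (gam x y a b)) zz), cst (xr (xr zz (gam x y a b)) t),
       cst (xr (xr zz (gam x y a b)) (sing a)) | cst (xr (xr zz (gam x y a b)) (sing b))]) [:: true; false]) [:: true; false]) ix) ix) (pats 6).
Proof. by vm_compute. Qed.
Lemma K_orb2 : all (fun t => all (fun a => all (fun b => (a != b) ==> ispr t a b ==>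
   [&& cst (xr (xr zz (gam false false a b)) zz), cst (xr (xr zz (gam true true a b)) t),
       cst (xr (xr zz (gam true false a b)) (sing a)) & cst (xr (xr zz (gam false true a b)) (sing b))]) ix) ix) (pats 6).
Proof. by vm_compute. Qed.

Lemma inix0 a : (a < 6)%N -> a \in ix.
Proof. by move=> h; rewrite mem_iota add0n. Qed.
Lemma size_xr0 g h : size (xr g h) = 6%N.
Proof. by rewrite size_mkseq. Qed.
Lemma ispr_in t a b : ispr t a b -> t \in [:: pr a b; npr a b].
Proof. by case/orP => /eqP ->; rewrite !inE eqxx ?orbT. Qed.

Lemma K1P t : size t = 6%N -> ~~ odd (count id t) -> ~~ cst t ->
  bad (xr zz t) /\ exists a b, [/\ (a < 6)%N, (b < 6)%N, a != b & ispr t a b].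
Proof.
move=> hs ho hc; move/implyP: (bf K1 hs) => /(_ ho) /implyP /(_ hc) /andP [hb H].
split=> //; case/hasP: H => a; rewrite mem_iota add0n => /andP [_ ha].
by move=> /hasP [b]; rewrite mem_iota add0n => /andP [_ hb'] /andP [hab hp]; exists a, b.
Qed.

Lemma K_MMP a b : (a < 6)%N -> (b < 6)%N -> a != b -> ~~ cst (xr (sing a) (sing b)).
Proof. by move=> ha hb hab; move/allP: K_MM => /(_ a (inix0 ha)) /allP /(_ b (inix0 hb)) /implyP; apply. Qed.

Lemma K_oppP r a : size r = 6%N -> (a < 6)%N -> ~~ odd (count id r) -> ~~ cst (xr (xr zz r) (sing a)).
Proof. by move=> hs ha; move: (bf K_opp hs) => /allP /(_ a (inix0 ha)) /implyP. Qed.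

Lemma K_intP t a b : size t = 6%N -> (a < 6)%N -> (b < 6)%N -> a != b -> ispr t a b ->
   [&& ~~ bad (xr zz (sing a)), ~~ bad (xr zz (sing b)), ~~ bad (xr t (sing a)) & ~~ bad (xr t (sing b))].
Proof.
move=> hs ha hb hab hp; move: (bf K_int hs) => /allP /(_ a (inix0 ha)) /allP /(_ b (inix0 hb)).
by move=> /implyP /(_ hab) /implyP /(_ hp).
Qed.

Lemma K_uniqP t s a b : size s = 6%N -> (a < 6)%N -> (b < 6)%N -> a != b -> ispr t a b ->
   ~~ cst s -> ~~ bad (xr zz s) -> ~~ bad (xr t s) -> cst (xr s (sing a)) || cst (xr s (sing b)).
Proof.
move=> hs ha hb hab hp h1 h2 h3.
move/allP: K_uniq => /(_ a (inix0 ha)) /allP /(_ b (inix0 hb)) /implyP /(_ hab) /allP.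
move=> /(_ t (ispr_in hp)) /allP /(_ s (mem_pats hs)).
by move=> /implyP /(_ h1) /implyP /(_ h2) /implyP /(_ h3).
Qed.

Lemma K_orbP t a b x y : size t = 6%N -> (a < 6)%N -> (b < 6)%N -> a != b -> ispr t a b ->
   [|| cst (xr (xr zz (gam x y a b)) zz), cst (xr (xr zz (gam x y a b)) t),
       cst (xr (xr zz (gam x y a b)) (sing a)) | cst (xr (xr zz (gam x y a b)) (sing b))].
Proof.
move=> hs ha hb hab hp; move: (bf K_orb hs) => /allP /(_ a (inix0 ha)) /allP /(_ b (inix0 hb)).
have hx : x \in [:: true; false] by case: x.
have hy : y \in [:: true; false] by case: y.
by move=> /implyP /(_ hab) /implyP /(_ hp) /allP /(_ x hx) /allP /(_ y hy).
Qed.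

Lemma K_orb2P t a b : size t = 6%N -> (a < 6)%N -> (b < 6)%N -> a != b -> ispr t a b ->
   [&& cst (xr (xr zz (gam false false a b)) zz), cst (xr (xr zz (gam true true a b)) t),
       cst (xr (xr zz (gam true false a b)) (sing a)) & cst (xr (xr zz (gam false true a b)) (sing b))].
Proof.
move=> hs ha hb hab hp; move: (bf K_orb2 hs) => /allP /(_ a (inix0 ha)) /allP /(_ b (inix0 hb)).
by move=> /implyP /(_ hab) /implyP /(_ hp).
Qed.

Lemma K_cstzP t : size t = 6%N -> cst t -> cst (xr zz t).
Proof. by move=> hs; move: (bf K_cstz hs) => /implyP. Qed.

Local Open Scope ring_scope.
Section Main.
Variables (K : closedFieldType) (F : {poly K}) (rs : seq K).
Hypotheses (rs_uniq : uniq rs) (rs_size : size rs = 6%N)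
  (rootF : forall x, root F x = (x \in rs))
  (dvdF : forall g, (F %| g) = all (root g) rs) (two_nz : (2 : K) != 0).

Definition r i := nth 0 rs i.

Lemma r_inj i j : (i < 6)%N -> (j < 6)%N -> r i = r j -> i = j.
Proof. by move=> hi hj /eqP; rewrite nth_uniq ?rs_size // => /eqP. Qed.

Lemma rootr i : (i < 6)%N -> root F (r i).
Proof. by move=> hi; rewrite rootF mem_nth ?rs_size. Qed.

Lemma rootFP x : root F x -> exists2 i, (i < 6)%N & x = r i.
Proof.
rewrite rootF => hx; exists (index x rs); first by rewrite -rs_size index_mem.
by rewrite /r nth_index.
Qed.

Lemma dvdFP g : F %| g <-> forall i, (i < 6)%N -> g.[r i] = 0.
Proof.
rewrite dvdF; split.
  by move=> /allP H i hi; apply/eqP; apply: H; rewrite mem_nth ?rs_size.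
move=> H; apply/allP => x /(nthP 0) [i hi <-]; apply/eqP; apply: H; by rewrite -rs_size.
Qed.

Definition sgn (b : bool) : K := if b then -1 else 1.
Lemma sgnM a b : sgn a * sgn b = sgn (a (+) b).
Proof. by case: a; case: b; rewrite /sgn /= ?mulN1r ?opprK ?mul1r. Qed.
Lemma sgnK a : sgn a * sgn a = 1.
Proof. by rewrite sgnM addbb. Qed.
Lemma sgn_nz a : sgn a != 0.
Proof. by case: a; rewrite /sgn ?oppr_eq0 oner_eq0. Qed.
Lemma sgnV a : (sgn a)^-1 = sgn a.
Proof. by case: a; rewrite /sgn ?invrN invr1. Qed.
Lemma sgn_inj a b : sgn a = sgn b -> a = b.
Proof.
have h : (-1 : K) != 1.
  apply/eqP => /(congr1 (fun x => x + 1)); rewrite addNr => /eqP.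
  by rewrite eq_sym; apply/negP.
by case: a; case: b => //= /eqP; rewrite ?(negPf h) // eq_sym (negPf h).
Qed.
Lemma sgnX a n : sgn a ^+ n = sgn (odd n && a).
Proof.
case: a; last by rewrite andbF expr1n.
elim: n => [|n IH]; first by rewrite expr0.
by rewrite exprS IH sgnM !andbT.
Qed.

Lemma interp (g : nat -> K) : exists v : {poly K}, forall i, (i < 6)%N -> v.[r i] = g i.
Proof.
pose h (i : 'I_6) := \prod_(j < 6 | j != i) ('X - (r j)%:P).
have hE i k : (h i).[r k] = \prod_(j < 6 | j != i) (r k - r j).
  by rewrite /h horner_prod; apply: eq_bigr => j _; rewrite hornerXsubC.
exists (\sum_(i < 6) (g i / (h i).[r i]) *: h i) => k hk.
pose k' : 'I_6 := Ordinal hk.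
rewrite horner_sum (bigD1 k') //= big1 ?addr0.
  rewrite hornerZ divfK //; rewrite hE prodf_seq_neq0; apply/allP => j _.
  apply/implyP => hj; rewrite subr_eq0; apply/eqP => /r_inj.
  by move=> /(_ hk (ltn_ord j)) e; move: hj; rewrite -val_eqE /= e eqxx.
move=> i hi; rewrite hornerZ (hE i k) (bigD1 k') 1?eq_sym //= subrr mul0r mulr0 //.
Qed.

Definition Lin (e : nat -> K) (v : {poly K}) :=
  exists s t, forall i, (i < 6)%N -> e i * v.[r i] = s * r i + t.
Definition Pat (e : nat -> K) (g : seq bool) := Lin (fun i => sgn (bt g i) * e i).

Lemma line_ofE eps v : line_of F eps v <-> Lin (fun i => eps.[r i]) v.
Proof.
split=> [[s [t /dvdFP H]]|[s [t H]]]; exists s, t.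
  move=> i /H /eqP; rewrite !hornerE subr_eq0 => /eqP ->; by [].
apply/dvdFP => i /H; rewrite !hornerE => ->; by rewrite subrr.
Qed.

Lemma Lin_ext e e' : (forall i, (i < 6)%N -> e i = e' i) -> forall v, Lin e v <-> Lin e' v.
Proof.
by move=> H v; split=> [[s [t H']]|[s [t H']]]; exists s, t => i hi;
  rewrite -H' // H.
Qed.

Lemma Pat_cst e g h : cst (xr g h) -> forall v, Pat e g v <-> Pat e h v.
Proof.
move=> /allP Hc v.
have Hh i : (i < 6)%N -> bt h i = bt g i (+) bt (xr g h) 0.
  move=> hi; have /eqP <- : bt (xr g h) i == bt (xr g h) 0 by apply: Hc; rewrite mem_iota.
  by rewrite /bt /xr nth_mkseq // addbA addbb.
set c := bt (xr g h) 0.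
split=> [[s [t H]]|[s [t H]]].
  exists (sgn c * s), (sgn c * t) => i hi; rewrite Hh // -sgnM.
  transitivity (sgn c * (sgn (bt g i) * e i * v.[r i])); first by ring.
  by rewrite H //; ring.
exists (sgn c * s), (sgn c * t) => i hi.
have := H i hi; rewrite Hh // -sgnM => H'.
transitivity (sgn c * (sgn (bt g i) * sgn c * e i * v.[r i])).
  by rewrite -[LHS]mul1r -(sgnK c); ring.
by rewrite H'; ring.
Qed.

Lemma lin2 (a b x1 x2 : K) : x1 != x2 -> a * x1 + b = 0 -> a * x2 + b = 0 -> a = 0 /\ b = 0.
Proof.
move=> hx h1 h2.
have ha : a * (x1 - x2) = 0.
  by transitivity ((a * x1 + b) - (a * x2 + b)); [ring | rewrite h1 h2 subrr].
move: ha => /eqP; rewrite mulf_eq0 subr_eq0 (negPf hx) orbF => /eqP ha.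
by split=> //; move: h1; rewrite ha mul0r add0r.
Qed.

Lemma Pat_eq e g h : (forall i, (i < 6)%N -> e i != 0) -> size (xr g h) = 6%N ->
  (forall v, Pat e g v <-> Pat e h v) -> cst (xr g h).
Proof.
move=> He Hs H.
have [v Hv] := interp (fun i => (sgn (bt g i) * e i)^-1).
have /H [s [t Ht]] : Pat e g v.
  by exists 0, 1 => i hi; rewrite Hv // mul0r add0r divff // mulf_neq0 ?sgn_nz ?He.
have Hx i : (i < 6)%N -> sgn (bt (xr g h) i) = s * r i + t.
  move=> hi; rewrite -Ht // Hv // /bt /xr nth_mkseq // -sgnM invfM sgnV.
  transitivity (sgn (nth false g i) * sgn (nth false h i) * (e i / e i)).
    by rewrite divff ?He // mulr1.
  by ring.
have HP : has (fun i => has (fun j => (i != j) && (bt (xr g h) i == bt (xr g h) j)) ix) ix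
  := bf K_pig Hs.
case/hasP: HP => i; rewrite mem_iota add0n => /andP [_ hi].
move=> /hasP [j]; rewrite mem_iota add0n => /andP [_ hj] /andP [hij /eqP hb].
have [s0 t0] : s = 0 /\ t - sgn (bt (xr g h) i) = 0.
  apply: (@lin2 _ _ (r i) (r j)).
  - by apply/eqP => e0; move: hij; rewrite (r_inj hi hj e0) eqxx.
  - by rewrite addrA Hx // subrr.
  - by rewrite addrA hb Hx // subrr.
move: t0 => /eqP; rewrite subr_eq0 => /eqP t0.
have Hc k : (k < 6)%N -> bt (xr g h) k = bt (xr g h) i.
  by move=> hk; apply: sgn_inj; rewrite Hx // s0 mul0r add0r t0.
apply/allP => k; rewrite mem_iota add0n => /andP [_ hk].
by rewrite !Hc.
Qed.

Lemma inix a : (a < 6)%N -> a \in ix.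
Proof. by move=> h; rewrite mem_iota add0n. Qed.
Lemma btx g h i : (i < 6)%N -> bt (xr g h) i = bt g i (+) bt h i.
Proof. by move=> hi; rewrite /bt /xr nth_mkseq. Qed.
Lemma size_xr g h : size (xr g h) = 6%N.
Proof. by rewrite size_mkseq. Qed.

Lemma Pat_ext e g h : (forall i, (i < 6)%N -> bt g i = bt h i) -> forall v, Pat e g v <-> Pat e h v.
Proof. by move=> H; apply: Lin_ext => i hi; rewrite H. Qed.

Lemma Pat_noint e g h : (forall i, (i < 6)%N -> e i != 0) -> bad (xr g h) ->
  forall v, Pat e g v -> Pat e h v -> F %| v.
Proof.
move=> He /andP [B1 B2] v [s [t Hg]] [s' [t' Hh]].
have key i : (i < 6)%N -> s' * r i + t' = sgn (bt (xr g h) i) * (s * r i + t).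
  move=> hi; rewrite -Hg // -Hh // btx // -sgnM.
  transitivity (sgn (bt g i) * sgn (bt g i) * (sgn (bt h i) * e i * v.[r i])).
    by rewrite sgnK mul1r.
  by ring.
case/hasP: B1 => i1; rewrite mem_iota add0n => /andP [_ hi1].
move=> /hasP [i2]; rewrite mem_iota add0n => /andP [_ hi2] /andP [/andP [hi12 n1] n2].
have [es et] : s' - s = 0 /\ t' - t = 0.
  apply: (@lin2 _ _ (r i1) (r i2)).
  - by apply/eqP => e0; move: hi12; rewrite (r_inj hi1 hi2 e0) eqxx.
  - transitivity ((s' * r i1 + t') - (s * r i1 + t)); first by ring.
    by rewrite key // (negPf n1) /sgn mul1r subrr.
  - transitivity ((s' * r i2 + t') - (s * r i2 + t)); first by ring.
    by rewrite key // (negPf n2) /sgn mul1r subrr.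
move/eqP: es; rewrite subr_eq0 => /eqP es; move/eqP: et; rewrite subr_eq0 => /eqP et.
case/hasP: B2 => j1; rewrite mem_iota add0n => /andP [_ hj1].
move=> /hasP [j2]; rewrite mem_iota add0n => /andP [_ hj2] /andP [/andP [hj12 p1] p2].
have kz j : (j < 6)%N -> bt (xr g h) j -> s * r j + t = 0.
  move=> hj hb; have := key j hj; rewrite es et hb /sgn mulN1r => /eqP.
  rewrite -subr_eq0 opprK -mulr2n -mulr_natl mulf_eq0 (negPf two_nz) /= => /eqP; by [].
have [s0 t0] : s = 0 /\ t = 0.
  apply: (@lin2 _ _ (r j1) (r j2)); last by rewrite kz.
  - by apply/eqP => e0; move: hj12; rewrite (r_inj hj1 hj2 e0) eqxx.
  - by rewrite kz.
apply/dvdFP => i hi; have := Hg i hi; rewrite s0 t0 mul0r addr0 => /eqP.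
by rewrite !mulf_eq0 (negPf (sgn_nz _)) (negPf (He i hi)) /= => /eqP.
Qed.

Lemma Pat_int e g h : (forall i, (i < 6)%N -> e i != 0) -> ~~ bad (xr g h) ->
  exists v, ~~ (F %| v) /\ Pat e g v /\ Pat e h v.
Proof.
move=> He nb.
have HP : has (fun c => has (fun d => has (fun b0 =>
   (d != c) && all (fun i => (i != c) ==> (bt (xr g h) i == b0)) ix) [:: true; false]) ix) ix
  := implyP (bf K_nint (size_xr g h)) nb.
case/hasP: HP => c; rewrite mem_iota add0n => /andP [_ hc].
move=> /hasP [d]; rewrite mem_iota add0n => /andP [_ hd] /hasP [b0 _] /andP [hdc /allP Hb].
have [v Hv] := interp (fun i => sgn (bt g i) * (r i - r c) / e i).
have Hv' i : (i < 6)%N -> sgn (bt g i) * e i * v.[r i] = r i - r c.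
  move=> hi; rewrite Hv //.
  transitivity (sgn (bt g i) * sgn (bt g i) * (e i / e i) * (r i - r c)); first by ring.
  by rewrite sgnK divff ?He // !mul1r.
exists v; split; last split.
- apply/negP => /dvdFP /(_ d hd); rewrite Hv // => /eqP.
  rewrite !mulf_eq0 invr_eq0 (negPf (sgn_nz _)) (negPf (He d hd)) subr_eq0 /= orbF.
  by move=> /eqP e0; move: hdc; rewrite (r_inj hd hc e0) eqxx.
- by exists 1, (- r c) => i hi; rewrite Hv' // mul1r.
- exists (sgn b0), (- (sgn b0 * r c)) => i hi.
  transitivity (sgn (bt g i) * sgn (bt h i) * (sgn (bt g i) * e i * v.[r i])).
    transitivity (sgn (bt g i) * sgn (bt g i) * (sgn (bt h i) * e i * v.[r i])).
      by rewrite sgnK mul1r.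
    by ring.
  rewrite Hv' // sgnM -btx //.
  have [->|hic] := eqVneq i c; first by rewrite subrr mulr0; ring.
  have /eqP -> := implyP (Hb i (inix hi)) hic; ring.
Qed.

Lemma mul_lineP e L g m h : (forall v, L v <-> Pat e g v) ->
  (forall i, (i < 6)%N -> m.[r i] = sgn (bt h i)) ->
  forall w, mul_line F m L w <-> Pat e (xr g h) w.
Proof.
move=> HL Hm w; split.
  move=> [v [/HL [s [t H]] /dvdFP Hd]]; exists s, t => i hi.
  have := Hd i hi; rewrite hornerD hornerN hornerM Hm // => /eqP; rewrite subr_eq0 => /eqP ->.
  rewrite -H // btx // -sgnM.
  transitivity (sgn (bt h i) * sgn (bt h i) * (sgn (bt g i) * e i * v.[r i])); first by ring.
  by rewrite sgnK mul1r.
move=> [s [t H]]; exists (m * w); split.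
  apply/HL; exists s, t => i hi; rewrite -H // btx // -sgnM hornerM Hm //; ring.
apply/dvdFP => i hi; rewrite hornerD hornerN !hornerM Hm //.
transitivity (w.[r i] * (1 - sgn (bt h i) * sgn (bt h i))); first by ring.
by rewrite sgnK subrr mulr0.
Qed.

Lemma is_muE I m : is_mu F I m -> forall i, (i < 6)%N -> m.[r i] = sgn (r i \in I).
Proof. by move=> H i hi; rewrite H ?rootr. Qed.

Lemma is_mu1E a m : (a < 6)%N -> is_mu F [:: r a] m -> forall i, (i < 6)%N -> m.[r i] = sgn (bt (sing a) i).
Proof.
move=> ha H i hi; rewrite (is_muE H) // inE /bt /sing nth_mkseq //.
congr sgn; apply/eqP/eqP => [/r_inj|->] //; exact.
Qed.

Lemma mu_exists a : (a < 6)%N -> exists m, is_mu F [:: r a] m.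
Proof.
move=> ha; have [m Hm] := interp (fun i => sgn (i == a)).
exists m => x /rootFP [i hi ->]; rewrite Hm // inE.
have -> : (r i == r a) = (i == a) by apply/eqP/eqP => [/r_inj|->] //; exact.
by case: (i == a).
Qed.

Lemma count_I (I : seq K) : uniq I -> all (root F) I ->
  count id (mkseq (fun i => r i \in I) 6) = size I.
Proof.
move=> uI /allP aI.
rewrite /mkseq count_map.
have -> : count (preim (fun i => r i \in I) id) (iota 0 6) = count (mem I) (map r (iota 0 6)).
  by rewrite count_map.
have -> : map r (iota 0 6) = rs by rewrite -rs_size; exact: (mkseq_nth 0 rs).
rewrite -size_filter; apply: perm_size; apply: uniq_perm => //.
  exact: filter_uniq.
by move=> x; rewrite mem_filter andb_idr // => /aI; rewrite rootF.
Qed.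

Section Lam.
Variables (eps delta : {poly K}).
Hypotheses (Heps : F %| eps ^+ 2 - delta) (Hd : forall i, (i < 6)%N -> delta.[r i] != 0).
Definition ee i := eps.[r i].

Lemma ee_sq i : (i < 6)%N -> ee i ^+ 2 = delta.[r i].
Proof.
move=> hi; have := (dvdFP _).1 Heps i hi.
by rewrite hornerD hornerN horner_exp => /eqP; rewrite subr_eq0 => /eqP.
Qed.

Lemma ee_nz i : (i < 6)%N -> ee i != 0.
Proof.
move=> hi; apply/eqP => z; move: (Hd hi); rewrite -(ee_sq hi) z expr2 mul0r eqxx //.
Qed.

Lemma Lam_Pat N : inLambda F delta N -> exists s, size s = 6%N /\ forall v, N v <-> Pat ee s v.
Proof.
move=> [eN [HN HNl]]; exists (mkseq (fun i => eN.[r i] != ee i) 6); split.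
  by rewrite size_mkseq.
move=> v; rewrite HNl line_ofE; apply: Lin_ext => i hi.
rewrite /bt nth_mkseq //.
have : eN.[r i] ^+ 2 == ee i ^+ 2.
  have := (dvdFP _).1 HN i hi; rewrite hornerD hornerN horner_exp => /eqP.
  by rewrite subr_eq0 ee_sq // => /eqP ->.
rewrite eqf_sqr; case: eqVneq => [->|ne] /=; first by rewrite /sgn mul1r.
by move=> /eqP ->; rewrite /sgn mulN1r.
Qed.

Lemma Pat_Lam s : inLambda F delta (Pat ee s).
Proof.
have [eN HN] := interp (fun i => sgn (bt s i) * ee i).
exists eN; split.
  apply/dvdFP => i hi; rewrite hornerD hornerN horner_exp HN // exprMn.
  by rewrite sgnX /= /sgn mul1r (ee_sq hi) subrr.
by move=> v; rewrite line_ofE; apply: Lin_ext => i hi; rewrite HN.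
Qed.

Lemma L_zz L : (forall v, L v <-> line_of F eps v) -> forall v, L v <-> Pat ee zz v.
Proof.
move=> H v; rewrite H line_ofE; apply: Lin_ext => i hi.
by rewrite /bt nth_mkseq // /sgn mul1r.
Qed.

Lemma sp_extract L N a b : (forall v, L v <-> Pat ee a v) -> (forall v, N v <-> Pat ee b v) ->
  same_parity F L N -> exists p, [/\ size p = 6%N, ~~ odd (count id p) & cst (xr (xr a p) b)].
Proof.
move=> HL HN [I [m [uI aI oI Hm HS]]].
exists (mkseq (fun i => r i \in I) 6); split; first by rewrite size_mkseq.
  by rewrite count_I.
apply: (@Pat_eq ee); [exact: ee_nz | exact: size_xr |] => v.
transitivity (mul_line F m L v); last by rewrite HS HN.
symmetry; apply: mul_lineP HL _ v.
by move=> i hi; rewrite (is_muE Hm) // /bt nth_mkseq.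
Qed.

Lemma sp_build L N b : (forall v, L v <-> Pat ee zz v) -> (forall v, N v <-> Pat ee b v) ->
  size b = 6%N -> cst b -> same_parity F L N.
Proof.
move=> HL HN hs hc; exists [::], 1; split => //.
  by move=> x _; rewrite hornerC.
move=> v; rewrite (mul_lineP (h := zz) HL) //; last first.
  by move=> i hi; rewrite hornerC /bt nth_mkseq.
rewrite HN; transitivity (Pat ee zz v).
  by apply: Pat_ext => i hi; rewrite btx // /bt nth_mkseq.
exact: Pat_cst (K_cstzP hs hc) v.
Qed.

Lemma main_sec (L L' : {poly K} -> Prop) :
  (forall v, L v <-> line_of F eps v) ->
  inLambda F delta L' ->
  ~ same_line L L' ->
  same_parity F L L' ->
  ~ intersect F L L' /\
  exists M M' : {poly K} -> Prop,
    [/\ inLambda F delta M /\ inLambda F delta M',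
        ~ same_line M M',
        (opp_parity F L M /\ opp_parity F L M') /\
        [/\ intersect F L M, intersect F L' M,
            intersect F L M' & intersect F L' M'],
        (forall N, inLambda F delta N ->
           opp_parity F L N ->
           intersect F L N -> intersect F L' N ->
           same_line N M \/ same_line N M') &
        exists omega psi : K,
          [/\ root F omega, root F psi &
              forall N, in_orbit_Phi F omega psi L N <->
                (same_line N L \/ same_line N L' \/ same_line N M \/ same_line N M')]].
Proof.
move=> HL0 Lam' nLL' sp.
have HL := L_zz HL0.
have He := ee_nz.
have [be [sbe Hbe]] := Lam_Pat Lam'.
have [p [sp6 ep cp]] := sp_extract HL Hbe sp.
have HL' : forall v, L' v <-> Pat ee p v.
  move=> v; rewrite Hbe; transitivity (Pat ee (xr zz p) v).
    by symmetry; exact: Pat_cst cp v.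
  by apply: Pat_ext => i hi; rewrite btx // /bt nth_mkseq.
have ncp : ~~ cst p.
  apply/negP => cp'; apply: nLL' => v; rewrite HL HL'.
  exact: Pat_cst (K_cstzP sp6 cp') v.
have [bp [a [b [ha hb hab hpr]]]] := K1P sp6 ep ncp.
have [i1 i2 i3 i4] : [/\ ~~ bad (xr zz (sing a)), ~~ bad (xr zz (sing b)),
   ~~ bad (xr p (sing a)) & ~~ bad (xr p (sing b))].
  by apply/and4P; exact: K_intP.
have intP (L1 L2 : {poly K} -> Prop) g h : (forall v, L1 v <-> Pat ee g v) ->
    (forall v, L2 v <-> Pat ee h v) -> ~~ bad (xr g h) -> intersect F L1 L2.
  move=> H1 H2 nb; have [v [nv [P1 P2]]] := Pat_int He nb.
  by exists v; rewrite H1 H2.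
have nintP (L1 L2 : {poly K} -> Prop) g h : (forall v, L1 v <-> Pat ee g v) ->
    (forall v, L2 v <-> Pat ee h v) -> intersect F L1 L2 -> ~~ bad (xr g h).
  move=> H1 H2 [v [nv [P1 P2]]]; apply/negP => bd.
  by move: nv; rewrite (Pat_noint He bd ((H1 v).1 P1) ((H2 v).1 P2)).
split.
  by move=> /(nintP _ _ _ _ HL HL'); rewrite bp.
have refl g : forall v, Pat ee g v <-> Pat ee g v by [].
exists (Pat ee (sing a)), (Pat ee (sing b)); split.
- by split; apply: Pat_Lam.
- by move=> /(Pat_eq He (size_xr _ _)); apply/negP; exact: K_MMP.
- split; last split.
  + split => /(sp_extract HL (refl _)) [q [sq eq cq]].
      by move: cq; apply/negP; exact: K_oppP.
    by move: cq; apply/negP; exact: K_oppP.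
  + exact: intP HL (refl _) i1.
  + exact: intP HL' (refl _) i3.
  + exact: intP HL (refl _) i2.
  + exact: intP HL' (refl _) i4.
- move=> N LN oN iLN iL'N.
  have [sg [ssg Hsg]] := Lam_Pat LN.
  have nc : ~~ cst sg.
    by apply/negP => c; apply: oN; exact: sp_build HL Hsg ssg c.
  have nb1 := nintP _ _ _ _ HL Hsg iLN.
  have nb2 := nintP _ _ _ _ HL' Hsg iL'N.
  case/orP: (K_uniqP ssg ha hb hab hpr nc nb1 nb2) => c; [left | right] => v;
    rewrite Hsg; exact: Pat_cst c v.
- exists (r a), (r b); split; [exact: rootr | exact: rootr |] => N.
  have [mo Hmo] := mu_exists ha.
  have [mp Hmp] := mu_exists hb.
  have val (mo' mp' : {poly K}) x y : is_mu F [:: r a] mo' -> is_mu F [:: r b] mp' ->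
     forall i, (i < 6)%N -> (mo' ^+ x * mp' ^+ y).[r i] = sgn (bt (gam (odd x) (odd y) a b) i).
    move=> H1 H2 i hi; rewrite hornerM !horner_exp (is_mu1E ha H1) // (is_mu1E hb H2) //.
    by rewrite !sgnX sgnM /bt /gam /sing !nth_mkseq.
  split.
    move=> [x [y [mo' [mp' [H1 H2 HS]]]]].
    have HN : forall v, N v <-> Pat ee (xr zz (gam (odd x) (odd y) a b)) v.
      by move=> v; rewrite -HS; apply: mul_lineP HL _ v; exact: val.
    have := K_orbP (odd x) (odd y) sp6 ha hb hab hpr.
    case/or4P => c; [left | right; left | right; right; left | right; right; right] => v;
      rewrite HN ?HL ?HL'; exact: Pat_cst c v.
  have [c1 c2 c3 c4] := and4P (K_orb2P sp6 ha hb hab hpr).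
  have orb x y T : (forall v, T v <-> Pat ee (xr zz (gam (odd x) (odd y) a b)) v) ->
      same_line N T -> in_orbit_Phi F (r a) (r b) L N.
    move=> HT HNT; exists x, y, mo, mp; split => // v.
    rewrite (mul_lineP HL (val _ _ x y Hmo Hmp)) -HT HNT //.
  case=> [H|[H|[H|H]]].
  + apply: (orb 0%N 0%N L) H => v; rewrite HL; symmetry; exact: Pat_cst c1 v.
  + apply: (orb 1%N 1%N L') H => v; rewrite HL'; symmetry; exact: Pat_cst c2 v.
  + apply: (orb 1%N 0%N) H => v; symmetry; exact: Pat_cst c3 v.
  + apply: (orb 0%N 1%N) H => v; symmetry; exact: Pat_cst c4 v.
Qed.
End Lam.
End Main.
End PilotAux.
Import PilotAux.

Theorem lemma2p15 (k : fieldType) (K : closedFieldType)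
  (iota : {rmorphism k -> K}) (f : {poly k}) (delta : {poly K})
  (L L' : {poly K} -> Prop) :
  ~~ (2%N \in [pchar k]) ->
  separable_poly f -> size f = 7%N ->
  coprimep delta (map_poly iota f) ->
  inLambda (map_poly iota f) delta L ->
  inLambda (map_poly iota f) delta L' ->
  ~ same_line L L' ->
  same_parity (map_poly iota f) L L' ->
  ~ intersect (map_poly iota f) L L' /\
  exists M M' : {poly K} -> Prop,
    [/\ inLambda (map_poly iota f) delta M /\ inLambda (map_poly iota f) delta M',
        ~ same_line M M',
        (opp_parity (map_poly iota f) L M /\ opp_parity (map_poly iota f) L M') /\
        [/\ intersect (map_poly iota f) L M, intersect (map_poly iota f) L' M,
            intersect (map_poly iota f) L M' & intersect (map_poly iota f) L' M'],
        (forall N, inLambda (map_poly iota f) delta N ->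
           opp_parity (map_poly iota f) L N ->
           intersect (map_poly iota f) L N -> intersect (map_poly iota f) L' N ->
           same_line N M \/ same_line N M') &
        exists omega psi : K,
          [/\ root (map_poly iota f) omega, root (map_poly iota f) psi &
              forall N, in_orbit_Phi (map_poly iota f) omega psi L N <->
                (same_line N L \/ same_line N L' \/ same_line N M \/ same_line N M')]].
Proof.
move=> hc sepf sizef cop [eps [Heps HLe]] LamL' nLL' sp.
set F := map_poly iota f in cop Heps HLe LamL' sp *.
have sepF : separable_poly F by rewrite separable_map.
have sizeF : size F = 7%N by rewrite size_map_poly.
have two : (2 : K) != 0.
  have h2 : (2%:R : k) != 0.
    by apply/negP => h; move: hc; rewrite inE /= h.
  by rewrite -(rmorph_nat iota) fmorph_eq0.
have [rs Hrs] := closed_field_poly_normal F.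
have Fn0 : F != 0 by rewrite -size_poly_eq0 sizeF.
have cn0 : lead_coef F != 0 by rewrite lead_coef_eq0.
have srs : size rs = 6%N.
  by move: sizeF; rewrite Hrs size_scale // size_prod_XsubC => -[].
have urs : uniq rs.
  rewrite -separable_prod_XsubC -(eqp_separable (eqp_scale _ cn0)) -Hrs //.
have rootFh x : root F x = (x \in rs) by rewrite Hrs rootZ // root_prod_XsubC.
have dvdFh g : (F %| g) = all (root g) rs.
  rewrite Hrs dvdpZl //; apply/idP/idP => [H|H].
    by apply/allP => x xr; apply: root_dvdp H _; rewrite root_prod_XsubC.
  by apply: uniq_roots_dvdp => //; rewrite uniq_rootsE.
have Hd : forall i, (i < 6)%N -> delta.[r rs i] != 0.
  move=> i hi; apply: (@coprimep_root _ F); first by rewrite coprimep_sym.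
  by rewrite rootFh /r mem_nth // srs.
have HL0 : forall v, L v <-> line_of F eps v by move=> v; exact: HLe.
exact: (main_sec urs srs rootFh dvdFh two Heps Hd HL0 LamL' nLL' sp).
Qed.
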